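(* For every integer $n\ge1$, $$F_{2n-1}=\sum_{(a_1,\dots,a_k)\in C(n)}2^{\#\{i\,:\,a_i=1\}+n-2k},$$ where $k$ is the number of parts of the composition.
   Context: $C(n)$ is the set of all compositions $(a_1,\dots,a_k)$ of $n$ (sequences of positive integers with sum $n$, any number of parts). Fibonacci numbers: $F_0=0$, $F_1=1$, $F_n=F_{n-1}+F_{n-2}$. *)

(* Defs.v *)
From mathcomp Require Import all_boot.
Set Implicit Arguments. Unset Strict Implicit. Unset Printing Implicit Defensive.

Fixpoint fib (n : nat) : nat :=
  match n with
  | 0 => 0
  | 1 => 1
  | (m.+1 as p).+1 => fib p + fib m
  end.

Definition is_composition (n : nat) (s : seq nat) : bool :=
  all (fun a => 0 < a) s && (sumn s == n).

Fixpoint bounded_seqs (b m : nat) : seq (seq nat) :=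
  match m with
  | 0 => [:: [::]]
  | m'.+1 => [::] :: [seq a :: s | a <- iota 1 b, s <- bounded_seqs b m']
  end.

(* C(n): the list of all compositions of n (every composition of n has
   at most n parts, each at most n, so it occurs exactly once here). *)
Definition compositions (n : nat) : seq (seq nat) :=
  [seq s <- bounded_seqs n n | is_composition n s].

(* Main.v *)
Require Import Defs.
From mathcomp Require Import all_boot.
From mathcomp Require Import zify.

Definition T (n : nat) : nat := if n is k.+1 then fib (2 * k + 1) else 1.
Definition f (a : nat) : nat := 2 ^ ((a == 1) + a - 2).
Definition w (s : seq nat) : nat := 2 ^ (count_mem 1 s + sumn s - 2 * size s).
Definition Q (k : nat) : nat := \sum_(i < k) 2 ^ i * T (k - 1 - i).

Lemma fibSS n : fib n.+2 = fib n.+1 + fib n.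
Proof. by []. Qed.

Lemma T3 k : T k.+2 + T k = 3 * T k.+1.
Proof.
case: k => [|j]; first by [].
rewrite /T.
have -> : 2 * j.+2 + 1 = (2 * j + 3).+2 by lia.
have -> : 2 * j.+1 + 1 = (2 * j + 1).+2 by lia.
rewrite !fibSS.
have -> : (2 * j + 3) = (2*j+1).+2 by lia.
rewrite !fibSS. lia.
Qed.

Lemma QS k : Q k.+1 = T k + 2 * Q k.
Proof.
rewrite /Q big_ord_recl /= expn0 mul1n subn0 subn1 /=; congr (_ + _).
rewrite big_distrr /=; apply: eq_bigr => i _.
rewrite /bump /= add1n expnS mulnA; congr (_ * T _); lia.
Qed.

Lemma TQ k : T k.+1 = T k + Q k.
Proof.
elim: k => [|k IH]; first by rewrite /Q big_ord0.
have := T3 k; rewrite QS; lia.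
Qed.

Lemma Tsum n : 1 <= n -> \sum_(1 <= a < n.+1) f a * T (n - a) = T n.
Proof.
case: n => [//|k] _.
rewrite TQ big_nat_recl //.
have -> : f 1 * T (k.+1 - 1) = T k by rewrite /f /= mul1n subSS subn0.
congr (_ + _).
rewrite -(add0n 1) big_addn subn1 /= big_mkord /Q.
apply: eq_bigr => i _.
rewrite /f; congr (2 ^ _ * T _); lia.
Qed.

Lemma size_le s : all (fun a => 0 < a) s -> 2 * size s <= count_mem 1 s + sumn s.
Proof.
elim: s => [//|a s IH] /= /andP [Ha Hs].
have := IH Hs. case: eqP => [->|Hne] /=. all: lia.
Qed.

Lemma wcons a s : 0 < a -> all (fun a => 0 < a) s -> w (a :: s) = f a * w s.
Proof.
move=> Ha Hs; rewrite /w /f -expnD; congr (2 ^ _).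
have := size_le s Hs. rewrite /=. case: eqP => [->|Hne] /=; lia.
Qed.

Definition W b m n := \sum_(s <- bounded_seqs b m | is_composition n s) w s.

Lemma Wrec b m n : W b m.+1 n =
  (n == 0) + \sum_(a <- iota 1 b) (if a <= n then f a * W b m (n - a) else 0).
Proof.
rewrite /W /= big_cons.
have -> : is_composition n [::] = (n == 0) by rewrite /is_composition /= eq_sym.
set rest := bigop _ _ _.
have E : rest = \sum_(a <- iota 1 b) (if a <= n then f a * W b m (n - a) else 0).
  rewrite /rest big_mkcond big_allpairs_dep /=.
  apply: eq_big_seq => a; rewrite mem_iota => /andP [Ha _].
  case: ifP => Han.
  - rewrite /W big_distrr [RHS]big_mkcond /=; apply: eq_bigr => s _.
    rewrite /is_composition /= Ha /=; case Hs: (all _ _) => //=.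
    have -> : (a + sumn s == n) = (sumn s == n - a) by apply/eqP/eqP; lia.
    case: ifP => // _. by rewrite wcons.
  - rewrite big1 // => s _; rewrite /is_composition /= Ha /=; case: (all _ _) => //=.
    case: eqP => //; lia.
rewrite -E /W; case: (n == 0) => //.
Qed.

Lemma WT n : forall b m, n <= b -> n <= m -> W b m n = T n.
Proof.
elim/ltn_ind: n => n IH b [|m] Hb Hm.
- have -> : n = 0 by lia. by rewrite /W /= big_cons big_nil.
- rewrite Wrec.
  case: n IH Hb Hm => [|n] IH Hb Hm.
  + by rewrite big1_seq // => a /andP [_ Ha]; move: Ha; rewrite mem_iota; case: a.
  + rewrite add0n.
    transitivity (\sum_(1 <= a < b.+1) (if a <= n.+1 then f a * T (n.+1 - a) else 0)).
      rewrite /index_iota subn1 /= big_seq [RHS]big_seq; apply: eq_bigr => a.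
      rewrite mem_iota => /andP [Ha _].
      case: ifP => // Han; rewrite IH //; lia.
    have h2 : n.+2 <= b.+1 by lia.
    rewrite (big_cat_nat (n := n.+2) _ h2) //=.
    rewrite [X in _ + X](_ : _ = 0) ?addn0; last first.
      by rewrite big_nat big1 // => a /andP [Ha _]; case: ifP => //; lia.
    rewrite -[RHS]/(T n.+1) -(@Tsum n.+1) //; apply: eq_big_nat => a /andP [_ Ha].
    by case: ifP => //; lia.
Qed.

Theorem mainTheorem14 (n : nat) : 1 <= n ->
  fib (2 * n - 1) =
  \sum_(s <- compositions n) 2 ^ (count_mem 1 s + n - 2 * size s).
Proof.
move=> Hn.
have -> : fib (2 * n - 1) = T n by case: n Hn => // k _; rewrite /T; congr fib; lia.
rewrite -(WT n n n (leqnn n) (leqnn n)) /W /compositions big_filter.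
apply: eq_bigr => s /andP [_ /eqP <-] //.
Qed.
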